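(* Let $d\ge 1$ and $s\in(0,1/2)$. For all real numbers $r_0,r_1$, \[ (r_1^2 - r_1 r_0)\,\widetilde G_s(r_0) \;\ge\; F_s(r_1)-F_s(r_0). \]
   Context: For $\rho\in\mathbb{R}$ define $F_s(\rho) := \int_0^\rho \frac{\rho-r}{(1+r^2)^{(d+1+2s)/2}}\,dr$, $G_s(\rho) := \int_0^\rho (1+r^2)^{-(d+1+2s)/2}\,dr$ (so $G_s=F_s'$), and $\widetilde G_s(\rho) := \int_0^1 (1+\rho^2 r^2)^{-(d+1+2s)/2}\,dr$, so that $\rho\,\widetilde G_s(\rho)=G_s(\rho)$. *)

(* Defs.v *)
From Stdlib Require Import Reals.
From Coquelicot Require Import Coquelicot.
Open Scope R_scope.

Definition expo (d : nat) (s : R) : R := (INR d + 1 + 2 * s) / 2.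

(* weight  (1+x^2)^(-(d+1+2s)/2), base is positive so Rpower is the usual power *)
Definition wgt (d : nat) (s : R) (x : R) : R := Rpower (1 + x ^ 2) (- expo d s).

Definition F_s (d : nat) (s rho : R) : R :=
  RInt (fun r => (rho - r) * wgt d s r) 0 rho.

Definition G_s (d : nat) (s rho : R) : R := RInt (fun r => wgt d s r) 0 rho.

Definition Gt_s (d : nat) (s rho : R) : R :=
  RInt (fun r => Rpower (1 + rho ^ 2 * r ^ 2) (- expo d s)) 0 1.

(* Main.v *)
Require Import Defs.
From Stdlib Require Import Reals Lra Psatz.
From Coquelicot Require Import Coquelicot.
Open Scope R_scope.

Lemma core (w G : R -> R) (g r0 c : R) :
 (forall x y, 0 <= x <= y -> w y * (y - x) <= G y - G x <= w x * (y - x)) ->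
 (forall x, G (-x) = - G x) -> (forall x, 0 < w x) ->
 0 <= r0 -> w r0 <= g -> g * r0 = G r0 -> 0 <= (c - r0) * (g*(2*c - r0) - G c).
Proof.
intros HA Hodd Hw Hr0 Hg Hgr.
assert (G0 : G 0 = 0). { specialize (Hodd 0). rewrite Ropp_0 in Hodd. lra. }
pose proof (Hw r0) as wr0.
destruct (Rle_or_lt r0 c) as [Hc|Hc].
- destruct (HA r0 c) as [_ H2]; [lra|].
  assert (w r0 * (c-r0) <= g*(c-r0)) by (apply Rmult_le_compat_r; lra).
  assert (G c <= g * c) by lra.
  assert (g*c <= g*(2*c-r0)) by (apply Rmult_le_compat_l; lra).
  apply Rmult_le_pos; lra.
- destruct (Rle_or_lt 0 c) as [Hc0|Hc0].
  + destruct (HA 0 c) as [H1 _]; [lra|]. destruct (HA c r0) as [_ H2]; [lra|].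
    pose proof (Hw c).
    assert (c * G r0 <= r0 * G c) by nra.
    assert (0 <= G r0) by nra.
    destruct (Req_dec r0 0) as [E|E].
    * subst. lra.
    * assert (g * c <= G c). { assert (r0 * (g*c) <= r0 * G c) by nra.
        apply (Rmult_le_reg_l r0); lra. }
      assert (g*(2*c-r0) <= g*c) by (apply Rmult_le_compat_l; lra).
      replace ((c - r0) * (g * (2 * c - r0) - G c)) with ((r0-c)*(G c - g*(2*c-r0))) by ring.
      apply Rmult_le_pos; lra.
  + assert (Gc : G c = - G (-c)). { rewrite Hodd. ring. }
    destruct (Rle_or_lt r0 (-c)) as [Hy|Hy].
    * destruct (HA r0 (-c)) as [_ H2]; [lra|].
      assert (w r0 * (-c-r0) <= g*(-c-r0)) by (apply Rmult_le_compat_r; lra).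
      assert (g*(c-r0) <= 0) by (apply Rmult_le_0_l; lra).
      replace ((c - r0) * (g * (2 * c - r0) - G c)) with ((r0-c)*(-(g*(2*c-r0) - G c))) by ring.
      apply Rmult_le_pos; lra.
    * destruct (HA (-c) r0) as [H1 _]; [lra|]. pose proof (Hw (-c)).
      assert (0 <= w r0 * (r0 - - c)) by (apply Rmult_le_pos; lra).
      assert (g*(2*c) <= 0) by (apply Rmult_le_0_l; lra).
      replace ((c - r0) * (g * (2 * c - r0) - G c)) with ((r0-c)*(-(g*(2*c-r0) - G c))) by ring.
      apply Rmult_le_pos; lra.
Qed.

Section A.
Variables (d : nat) (s : R).
Hypothesis ha : 0 <= expo d s.

Lemma w_pos x : 0 < wgt d s x.
Proof. unfold wgt, Rpower. apply exp_pos. Qed.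

Lemma w_even x : wgt d s (-x) = wgt d s x.
Proof. unfold wgt. replace ((-x)^2) with (x^2) by ring. reflexivity. Qed.

Lemma w_mono x y : x^2 <= y^2 -> wgt d s y <= wgt d s x.
Proof.
intros H. unfold wgt, Rpower.
assert (ln (1 + x^2) <= ln (1 + y^2)) by (apply ln_le; nra).
assert (- expo d s * ln (1 + y ^ 2) <= - expo d s * ln (1 + x ^ 2)) by nra.
destruct H1 as [H1|H1]; [left; apply exp_increasing; exact H1| rewrite H1; lra].
Qed.

Lemma w_cont x : continuous (wgt d s) x.
Proof. apply (@ex_derive_continuous R_AbsRing R_NormedModule). unfold wgt, Rpower. auto_derive. nra. Qed.

Lemma w_ex a b : ex_RInt (wgt d s) a b.
Proof. apply (@ex_RInt_continuous R_CompleteNormedModule). intros; apply w_cont. Qed.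

Lemma rw_ex a b : ex_RInt (fun r => r * wgt d s r) a b.
Proof. apply (@ex_RInt_continuous R_CompleteNormedModule). intros; apply (@ex_derive_continuous R_AbsRing R_NormedModule).
unfold wgt, Rpower. auto_derive. nra. Qed.

Lemma G_def x : G_s d s x = RInt (wgt d s) 0 x.
Proof. reflexivity. Qed.

Lemma G_bounds x y : 0 <= x <= y ->
  wgt d s y * (y - x) <= G_s d s y - G_s d s x <= wgt d s x * (y - x).
Proof.
intros H.
assert (E : G_s d s y - G_s d s x = RInt (wgt d s) x y).
{ rewrite ?G_def. rewrite <- (@RInt_Chasles R_CompleteNormedModule (wgt d s) 0 x y) by apply w_ex.
  unfold plus; simpl. ring. }
rewrite E. split.
- replace (wgt d s y * (y - x)) with (RInt (fun _ => wgt d s y) x y).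
  2:{ rewrite RInt_const. unfold scal; simpl; unfold mult; simpl. ring. }
  apply RInt_le; [lra| apply ex_RInt_const | apply w_ex |].
  intros t Ht. apply w_mono. nra.
- replace (wgt d s x * (y - x)) with (RInt (fun _ => wgt d s x) x y).
  2:{ rewrite RInt_const. unfold scal; simpl; unfold mult; simpl. ring. }
  apply RInt_le; [lra| apply w_ex | apply ex_RInt_const |].
  intros t Ht. apply w_mono. nra.
Qed.

Lemma G_odd x : G_s d s (-x) = - G_s d s x.
Proof.
rewrite ?G_def.
pose proof (@RInt_comp_lin R_CompleteNormedModule (wgt d s) (-1) 0 0 x (w_ex _ _)) as H.
replace (-1 * 0 + 0) with 0 in H by ring. replace (-1 * x + 0) with (-x) in H by ring.
rewrite <- H.
rewrite (RInt_ext _ (fun y => opp (wgt d s y))).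
2:{ intros t _. unfold scal; simpl; unfold mult, opp; simpl.
    replace (-1 * t + 0) with (-t) by ring. rewrite w_even. ring. }
rewrite (@RInt_opp R_CompleteNormedModule) by apply w_ex. reflexivity.
Qed.

Lemma G_der x : is_derive (G_s d s) x (wgt d s x).
Proof.
apply (is_derive_RInt (wgt d s) (G_s d s) 0 x).
- apply filter_forall. intros b. apply (@RInt_correct R_CompleteNormedModule), w_ex.
- apply w_cont.
Qed.

Lemma F_eq x : F_s d s x = x * G_s d s x - RInt (fun r => r * wgt d s r) 0 x.
Proof.
unfold F_s; rewrite G_def.
apply is_RInt_unique.
apply (is_RInt_ext (fun r => minus (scal x (wgt d s r)) (r * wgt d s r))).
{ intros t _. unfold minus, plus, opp, scal; simpl; unfold mult; simpl. ring. }
apply (@is_RInt_minus R_NormedModule).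
- apply (@is_RInt_scal R_NormedModule). apply (@RInt_correct R_CompleteNormedModule), w_ex.
- apply (@RInt_correct R_CompleteNormedModule), rw_ex.
Qed.

Lemma F_der x : is_derive (F_s d s) x (G_s d s x).
Proof.
apply (is_derive_ext (fun x => x * G_s d s x - RInt (fun r => r * wgt d s r) 0 x)).
{ intros t; rewrite F_eq; reflexivity. }
assert (H1 : is_derive (fun x => x * G_s d s x) x (1 * G_s d s x + x * wgt d s x)).
{ apply (is_derive_mult (fun x => x) (G_s d s)); [auto_derive; reflexivity | apply G_der |].
  intros; apply Rmult_comm. }
assert (H2 : is_derive (fun x => RInt (fun r => r * wgt d s r) 0 x) x (x * wgt d s x)).
{ apply (is_derive_RInt (fun r => r * wgt d s r) _ 0 x).
  - apply filter_forall. intros b. apply (@RInt_correct R_CompleteNormedModule), rw_ex.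
  - apply (@ex_derive_continuous R_AbsRing R_NormedModule). unfold wgt, Rpower. auto_derive. nra. }
pose proof (is_derive_minus _ _ _ _ _ H1 H2) as H3.
replace (G_s d s x) with (minus (1 * G_s d s x + x * wgt d s x) (x * wgt d s x)).
- exact H3.
- unfold minus, plus, opp; simpl. ring.
Qed.

Lemma Gt_rel r0 : r0 * Gt_s d s r0 = G_s d s r0.
Proof.
unfold Gt_s; rewrite G_def.
pose proof (@RInt_comp_lin R_CompleteNormedModule (wgt d s) r0 0 0 1 (w_ex _ _)) as H.
replace (r0 * 0 + 0) with 0 in H by ring. replace (r0 * 1 + 0) with r0 in H by ring.
rewrite <- H.
rewrite (RInt_ext (fun y => scal r0 (wgt d s (r0 * y + 0))) (fun y => scal r0 (Rpower (1 + r0 ^ 2 * y ^ 2) (- expo d s)))).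
2:{ intros t _. unfold wgt. replace ((r0 * t + 0)^2) with (r0^2 * t^2) by ring. reflexivity. }
rewrite (@RInt_scal R_CompleteNormedModule). reflexivity.
apply (@ex_RInt_continuous R_CompleteNormedModule). intros; apply (@ex_derive_continuous R_AbsRing R_NormedModule).
unfold Rpower. auto_derive. nra.
Qed.

Lemma Gt_ge r0 : wgt d s r0 <= Gt_s d s r0.
Proof.
unfold Gt_s.
replace (wgt d s r0) with (RInt (fun _ => wgt d s r0) 0 1).
2:{ rewrite RInt_const. unfold scal; simpl; unfold mult; simpl. ring. }
apply RInt_le; [lra| apply ex_RInt_const | |].
- apply (@ex_RInt_continuous R_CompleteNormedModule). intros; apply (@ex_derive_continuous R_AbsRing R_NormedModule).
  unfold Rpower. auto_derive. nra.
- intros t Ht. change (Rpower (1 + r0 ^ 2 * t ^ 2) (- expo d s)) with (Rpower (1 + r0 ^ 2 * t ^ 2) (- expo d s)).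
  replace (1 + r0 ^ 2 * t ^ 2) with (1 + (r0*t)^2) by ring.
  apply (w_mono (r0*t) r0). 
  assert (t^2 <= 1) by nra. assert (0 <= r0^2) by nra. nra.
Qed.

End A.

Lemma core2 d s (ha : 0 <= expo d s) (r0 c : R) :
  0 <= (c - r0) * (Gt_s d s r0 * (2*c - r0) - G_s d s c).
Proof.
assert (HA := G_bounds d s ha). assert (Ho := G_odd d s).
destruct (Rle_or_lt 0 r0) as [H|H].
- apply (core (wgt d s) (G_s d s)); auto.
  + apply w_pos.
  + apply Gt_ge; auto.
  + rewrite Rmult_comm. apply Gt_rel.
- assert (E : Gt_s d s r0 = Gt_s d s (-r0)).
  { unfold Gt_s. replace ((-r0)^2) with (r0^2) by ring. reflexivity. }
  pose proof (core (wgt d s) (G_s d s) (Gt_s d s r0) (-r0) (-c) HA Ho (w_pos d s)) as K.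
  rewrite (Ho c) in K.
  replace ((c - r0) * (Gt_s d s r0 * (2 * c - r0) - G_s d s c))
    with ((- c - - r0) * (Gt_s d s r0 * (2 * - c - - r0) - - G_s d s c)) by ring.
  apply K.
  + lra.
  + rewrite E. apply Gt_ge; auto.
  + rewrite Ho, <- (Gt_rel d s r0). ring.
Qed.

Theorem mainTheorem1 (d : nat) (s : R) (hd : (1 <= d)%nat) (hs0 : 0 < s) (hs1 : s < 1 / 2)
  (r0 r1 : R) :
  (r1 ^ 2 - r1 * r0) * Gt_s d s r0 >= F_s d s r1 - F_s d s r0.
Proof.
assert (ha : 0 <= expo d s).
{ unfold expo. pose proof (pos_INR d). lra. }
set (g := Gt_s d s r0).
set (k := fun x => g * x^2 - g * r0 * x - F_s d s x).
assert (Kd : forall x, is_derive k x (g * (2*x - r0) - G_s d s x)).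
{ intros x.
  assert (H1 : is_derive (fun x => g * x^2 - g * r0 * x) x (g * (2*x) - g*r0)).
  { auto_derive; [exact I | ring]. }
  pose proof (is_derive_minus _ _ _ _ _ H1 (F_der d s x)) as H3.
  replace (g * (2*x - r0) - G_s d s x) with (minus (g * (2*x) - g*r0) (G_s d s x)).
  - exact H3.
  - unfold minus, plus, opp; simpl. ring. }
destruct (MVT_gen k r0 r1 (fun x => g * (2*x - r0) - G_s d s x)) as [c [Hc E]].
- intros; apply Kd.
- intros x _. apply continuity_pt_filterlim.
  apply (@ex_derive_continuous R_AbsRing R_NormedModule). eexists; apply Kd.
- pose proof (core2 d s ha r0 c) as C. fold g in C.
  unfold k in E.
  assert (0 <= (g * (2 * c - r0) - G_s d s c) * (r1 - r0)).
  { destruct (Req_dec c r0) as [Ec|Ec].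
    - subst c. rewrite <- (Gt_rel d s r0). fold g.
      replace (g * (2 * r0 - r0) - r0 * g) with 0 by ring. lra.
    - destruct (Rle_or_lt r0 r1) as [Hr|Hr].
      + unfold Rmin, Rmax in Hc. destruct (Rle_dec r0 r1); [|lra].
        assert (0 < c - r0) by lra.
        assert (0 <= g * (2 * c - r0) - G_s d s c).
        { apply (Rmult_le_reg_l (c - r0)); lra. }
        apply Rmult_le_pos; lra.
      + unfold Rmin, Rmax in Hc. destruct (Rle_dec r0 r1); [lra|].
        assert (0 < r0 - c) by lra.
        assert (g * (2 * c - r0) - G_s d s c <= 0).
        { apply (Rmult_le_reg_l (r0 - c)). lra.
          replace ((r0 - c) * (g * (2 * c - r0) - G_s d s c)) with
            (-((c - r0) * (g * (2 * c - r0) - G_s d s c))) by ring. lra. }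
        replace ((g * (2 * c - r0) - G_s d s c) * (r1 - r0)) with
          ((-(g * (2 * c - r0) - G_s d s c)) * (r0 - r1)) by ring.
        apply Rmult_le_pos; lra. }
  unfold g in *. lra.
Qed.
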